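(* Let $R$ be a ring and $n\in\mathbb{N}$. Then: (1) If $r\in J(R)$, then the unit $1+r$ has exactly one clean decomposition (i.e. exactly one way of writing it as $e+u$ with $e$ idempotent and $u$ a unit). (2) Suppose $U(R)=1+J(R)$. Then $R$ is $n$-torsion clean if and only if $R$ is clean and $U(R)$ has finite exponent $n$; likewise, $R$ is strongly $n$-torsion clean if and only if $R$ is strongly clean and $U(R)$ has finite exponent $n$. Moreover, if $U(R)=1+J(R)$ and one of these equivalent conditions holds, then $R/J(R)$ is a boolean ring.
   Context: All rings are associative with identity. $U(R)$ is the unit group and $J(R)$ the Jacobson radical. A ring is clean (resp. strongly clean) if every element is $e+u$ with $e$ idempotent, $u$ a unit (resp. additionally $eu=ue$). A ring $R$ is (strongly) $n$-torsion clean if every $r\in R$ can be written $r=e+u$ with $e^2=e$, $u\in U(R)$, $u^n=1$ (and $eu=ue$ in the strong case), and $n$ is the smallest natural number with this property. *)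

(* Defs.v *)
From HB Require Import structures.
From mathcomp Require Import all_boot all_order all_algebra.
Set Implicit Arguments. Unset Strict Implicit. Unset Printing Implicit Defensive.
Import GRing.Theory.
Local Open Scope ring_scope.

Definition idempotent_el (R : unitRingType) (e : R) : Prop := e * e = e.

Definition left_ideal (R : unitRingType) (I : R -> Prop) : Prop :=
  [/\ I 0, (forall a b, I a -> I b -> I (a + b)) & (forall x a, I a -> I (x * a))].

Definition maximal_left_ideal (R : unitRingType) (I : R -> Prop) : Prop :=
  [/\ left_ideal I, ~ I 1 &
      forall K : R -> Prop, left_ideal K -> ~ K 1 ->
        (forall a, I a -> K a) -> forall a, K a -> I a].

Definition jacobson (R : unitRingType) (r : R) : Prop :=
  forall I : R -> Prop, maximal_left_ideal I -> I r.

Definition clean_decomp (R : unitRingType) (r e u : R) : Prop :=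
  [/\ idempotent_el e, u \is a GRing.unit & r = e + u].

Definition clean (R : unitRingType) : Prop :=
  forall r : R, exists e u, clean_decomp r e u.

Definition strongly_clean (R : unitRingType) : Prop :=
  forall r : R, exists e u, clean_decomp r e u /\ e * u = u * e.

Definition torsion_clean_prop (R : unitRingType) (n : nat) : Prop :=
  forall r : R, exists e u, clean_decomp r e u /\ u ^+ n = 1.

Definition strongly_torsion_clean_prop (R : unitRingType) (n : nat) : Prop :=
  forall r : R, exists e u, [/\ clean_decomp r e u, e * u = u * e & u ^+ n = 1].

Definition n_torsion_clean (R : unitRingType) (n : nat) : Prop :=
  [/\ (0 < n)%N, torsion_clean_prop R n &
      forall m, (0 < m)%N -> torsion_clean_prop R m -> (n <= m)%N].

Definition strongly_n_torsion_clean (R : unitRingType) (n : nat) : Prop :=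
  [/\ (0 < n)%N, strongly_torsion_clean_prop R n &
      forall m, (0 < m)%N -> strongly_torsion_clean_prop R m -> (n <= m)%N].

Definition units_killed_by (R : unitRingType) (n : nat) : Prop :=
  forall u : R, u \is a GRing.unit -> u ^+ n = 1.

Definition units_exponent (R : unitRingType) (n : nat) : Prop :=
  [/\ (0 < n)%N, units_killed_by R n &
      forall m, (0 < m)%N -> units_killed_by R m -> (n <= m)%N].

Definition units_eq_1_plus_J (R : unitRingType) : Prop :=
  forall x : R, x \is a GRing.unit <-> exists j, jacobson j /\ x = 1 + j.

(* R/J(R) is boolean: every coset is idempotent, i.e. x^2 - x in J(R) *)
Definition quotient_by_J_boolean (R : unitRingType) : Prop :=
  forall x : R, jacobson (x * x - x).

(* Main.v *)
Require Import Defs.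
From mathcomp Require Import all_boot all_order all_algebra.
From mathcomp Require classical_sets.
From Stdlib Require Import Classical.
Set Implicit Arguments. Unset Strict Implicit. Unset Printing Implicit Defensive.
Import GRing.Theory.
Local Open Scope ring_scope.

Lemma exists_max_ideal (R : unitRingType) (I0 : R -> Prop) :
  left_ideal I0 -> ~ I0 1 ->
  exists M : R -> Prop, maximal_left_ideal M /\ forall a, I0 a -> M a.
Proof.
move=> [I00 I0D I0M] I01.
pose P (A : R -> Prop) := left_ideal (fun x => A x \/ I0 x) /\ ~ (A 1 \/ I0 1).
have [|A [[HA H1] Amax]] := @classical_sets.Zorn_bigcup R P.
  move=> F FP Ftot; split; last first.
    by case; [case=> X FX X1; case: (FP X FX) => _; apply; left|].
  split.
  - by right.
  - move=> a b [[X FX Xa]|Ia] [[Y FY Yb]|Ib].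
    + have [XY|YX] := Ftot X Y FX FY.
      * have [[_ D _] _] := FP Y FY.
        case: (D a b (or_introl (XY _ Xa)) (or_introl Yb)) => h; last by right.
        by left; exists Y.
      * have [[_ D _] _] := FP X FX.
        case: (D a b (or_introl Xa) (or_introl (YX _ Yb))) => h; last by right.
        by left; exists X.
    + have [[_ D _] _] := FP X FX.
      case: (D a b (or_introl Xa) (or_intror Ib)) => h; last by right.
      by left; exists X.
    + have [[_ D _] _] := FP Y FY.
      case: (D a b (or_intror Ia) (or_introl Yb)) => h; last by right.
      by left; exists Y.
    + by right; apply: I0D.
  - move=> x a [[X FX Xa]|Ia]; last by right; apply: I0M.
    have [[_ _ Mu] _] := FP X FX.
    case: (Mu x a (or_introl Xa)) => h; last by right.
    by left; exists X.
exists (fun x => A x \/ I0 x); split; last by move=> a; right.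
split => // K [K0 KD KM] K1 MK a Ka.
apply: NNPP => Na.
apply: (Amax K).
  split; first by move=> x Ax; apply: MK; left.
  by move=> KA; apply: Na; left; apply: KA.
split; last by case=> // /MK.
split.
- by left.
- by move=> x y [Kx|/(fun h => MK _ (or_intror h)) Kx] [Ky|/(fun h => MK _ (or_intror h)) Ky]; left; apply: KD.
- by move=> x y [Ky|/(fun h => MK _ (or_intror h)) Ky]; left; apply: KM.
Qed.

Section Jac.
Variable R : unitRingType.
Implicit Types r x y u e v a s : R.

Lemma jac0 : jacobson (0 : R).
Proof. by move=> I [[]]. Qed.
Lemma jacD x y : jacobson x -> jacobson y -> jacobson (x + y).
Proof. by move=> Hx Hy I HI; case: (HI) => [[_ D _]] _ _; apply: D; [apply: Hx|apply: Hy]. Qed.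
Lemma jacM x y : jacobson y -> jacobson (x * y).
Proof. by move=> Hy I HI; case: (HI) => [[_ _ M]] _ _; apply: M; apply: Hy. Qed.
Lemma jacN x : jacobson x -> jacobson (- x).
Proof. by move=> Hx; rewrite -mulN1r; apply: jacM. Qed.

Lemma left_inv r : jacobson r -> exists y, y * (1 + r) = 1.
Proof.
move=> Hr; apply: NNPP => Hn.
pose I0 := fun a : R => exists y, a = y * (1 + r).
have HI0 : left_ideal I0.
  split.
  + by exists 0; rewrite mul0r.
  + by move=> a b [y ->] [z ->]; exists (y + z); rewrite mulrDl.
  + by move=> x a [y ->]; exists (x * y); rewrite mulrA.
have HI1 : ~ I0 1 by move=> [y Hy]; apply: Hn; exists y.
have [M [HM IM]] := exists_max_ideal HI0 HI1.
have Mr : M r by apply: Hr.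
case: HM => [[M0 MD MM] M1 _].
have M1r : M (1 + r) by apply: IM; exists 1; rewrite mul1r.
apply: M1; have := MD _ _ M1r (MM (-1) _ Mr).
by rewrite mulN1r addrK.
Qed.

Lemma jac_unit r : jacobson r -> (1 + r) \is a GRing.unit.
Proof.
move=> Hr; have [y Hy] := left_inv Hr.
have Hy' : y = 1 + (- (y * r)).
  by rewrite -Hy mulrDr mulr1 addrK.
have [z Hz] := left_inv (jacN (jacM y Hr)).
rewrite -Hy' in Hz.
have Hz1 : z = 1 + r.
  have -> : z = (z * y) * (1 + r) by rewrite -mulrA Hy mulr1.
  by rewrite Hz mul1r.
by apply/unitrP; exists y; split => //; rewrite -Hz1 Hz.
Qed.

Lemma part1 r : jacobson r -> exists! p : R * R, clean_decomp (1 + r) p.1 p.2.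
Proof.
move=> Hr; exists (0, 1 + r); split.
  by split => //=; [rewrite /idempotent_el mulr0 | apply: jac_unit | rewrite add0r].
case=> e u [/= He Uu H].
have Hj : jacobson (u^-1 * r) := jacM _ Hr.
have U1 := jac_unit (jacN Hj).
have Hu : u = 1 + r - e by rewrite H addrC addKr.
have Hf : 1 - e = u * (1 + - (u^-1 * r)).
  rewrite mulrDr mulr1 mulrN mulrA mulrV // mul1r Hu.
  by rewrite addrAC addrK.
have Uf : (1 - e) \is a GRing.unit by rewrite Hf unitrMr.
have Hff : (1 - e) * (1 - e) = 1 - e.
  by rewrite mulrBl mul1r mulrBr mulr1 He subrr subr0.
have := mulKr Uf (1 - e); rewrite Hff mulVr // => H1.
have He0 : e = 0 by rewrite -(subKr 1 e) -H1 subrr.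
by rewrite He0 Hu He0 subr0.
Qed.

Hypothesis HU : units_eq_1_plus_J R.

Lemma unit_decomp u e v : u \is a GRing.unit -> clean_decomp u e v -> e = 0 /\ v = u.
Proof.
move=> Uu Hd; have [j [Hj Hu]] := (proj1 (HU u)) Uu.
have [[e0 u0] [Hd0 Hun]] := part1 Hj.
have Hd1 : clean_decomp (1 + j) (0 : R) (1 + j).
  by split; [rewrite /idempotent_el mulr0 | rewrite -Hu | rewrite add0r].
have := Hun (0, 1 + j) Hd1; rewrite Hu in Hd; have := Hun (e, v) Hd.
by move=> -> [-> ->].
Qed.

Lemma tcp_iff m : torsion_clean_prop R m <-> clean R /\ units_killed_by R m.
Proof.
split.
  move=> H; split; first by move=> r; have [e [u [Hd _]]] := H r; exists e, u.
  move=> u Uu; have [e [v [Hd Hv]]] := H u.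
  by have [_ <-] := unit_decomp Uu Hd.
move=> [Hc Hk] r; have [e [u Hd]] := Hc r; exists e, u; split => //.
by apply: Hk; case: Hd.
Qed.

Lemma stcp_iff m : strongly_torsion_clean_prop R m <-> strongly_clean R /\ units_killed_by R m.
Proof.
split.
  move=> H; split; first by move=> r; have [e [u [Hd Hc _]]] := H r; exists e, u.
  move=> u Uu; have [e [v [Hd _ Hv]]] := H u.
  by have [_ <-] := unit_decomp Uu Hd.
move=> [Hc Hk] r; have [e [u [Hd Hcm]]] := Hc r; exists e, u; split => //.
by apply: Hk; case: Hd.
Qed.

Lemma jac_unitE x : jacobson x -> (1 + x) \is a GRing.unit.
Proof. by move=> Hx; apply/(proj2 (HU _)); exists x. Qed.

Lemma jacMr a s : jacobson a -> jacobson (a * s).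
Proof.
move=> Ha.
have Usa : (1 + s * a) \is a GRing.unit by apply: jac_unitE; apply: jacM.
set c := (1 + s * a)^-1.
have Hc : (1 + s * a) * c = 1 by rewrite mulrV.
have Hc' : c * (1 + s * a) = 1 by rewrite mulVr.
have U : (1 + a * s) \is a GRing.unit.
  apply/unitrP; exists (1 - a * c * s); split.
    rewrite mulrBl mul1r.
    have -> : a * c * s * (1 + a * s) = a * (c * (1 + s * a)) * s.
      by rewrite !(mulrDl, mulrDr, mul1r, mulr1, mulrA).
    by rewrite Hc' mulr1 addrK.
  rewrite mulrBr mulr1.
  have -> : (1 + a * s) * (a * c * s) = a * ((1 + s * a) * c) * s.
    by rewrite !(mulrDl, mulrDr, mul1r, mulr1, mulrA).
  by rewrite Hc mulr1 addrK.
have [j [Hj E]] := (proj1 (HU _)) U.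
have -> : a * s = j by move/addrI: E.
exact: Hj.
Qed.

Lemma boolean_of_clean : clean R -> quotient_by_J_boolean R.
Proof.
move=> Hc x; have [e [u [He Uu Hx]]] := Hc x.
have [j [Hj Hu]] := (proj1 (HU u)) Uu.
have [j0 [Hj0 E0]] := (proj1 (HU (-1))) (unitrN1 R).
have H2 : jacobson (1 + 1 : R).
  have -> : (1 + 1 : R) = - j0 by rewrite -[j0](addKr 1) -E0 opprD opprK.
  exact: jacN.
have -> : x * x - x = e * (1 + 1) + j * e + x * j.
  have Hx1 : x - 1 = e + j by rewrite Hx Hu addrCA [1 + _]addrC addrK.
  have -> : x * x - x = x * (x - 1) by rewrite mulrBr mulr1.
  rewrite Hx1 mulrDr; congr (_ + _).
  by rewrite {1}Hx Hu mulrDl mulrDl mul1r He mulrDr mulr1 addrA.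
by apply: jacD; [apply: jacD; [apply: jacM | apply: jacMr] | apply: jacM].
Qed.

End Jac.

Theorem proposition1p2 (R : unitRingType) (n : nat) :
  (forall r : R, jacobson r ->
     exists! p : R * R, clean_decomp (1 + r) p.1 p.2)
  /\
  (units_eq_1_plus_J R ->
     (n_torsion_clean R n <-> clean R /\ units_exponent R n)
     /\ (strongly_n_torsion_clean R n <-> strongly_clean R /\ units_exponent R n)
     /\ ((n_torsion_clean R n \/ (clean R /\ units_exponent R n)
          \/ strongly_n_torsion_clean R n \/ (strongly_clean R /\ units_exponent R n))
         -> quotient_by_J_boolean R)).
Proof.
split; first exact: part1.
move=> HU.
have tc := tcp_iff HU; have stc := stcp_iff HU.
have sc_c : strongly_clean R -> clean R.
  by move=> H r; have [e [u [Hd _]]] := H r; exists e, u.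
split.
  split.
    case=> n0 Ht Hm; have [Hc Hk] := (proj1 (tc n)) Ht; split => //; split => //.
    by move=> m m0 Km; apply: Hm => //; apply/(proj2 (tc m)).
  case=> Hc [n0 Hk Hm]; split => //; first by apply/(proj2 (tc n)).
  by move=> m m0 /(proj1 (tc m)) [_ Km]; apply: Hm.
split.
  split.
    case=> n0 Ht Hm; have [Hc Hk] := (proj1 (stc n)) Ht; split => //; split => //.
    by move=> m m0 Km; apply: Hm => //; apply/(proj2 (stc m)).
  case=> Hc [n0 Hk Hm]; split => //; first by apply/(proj2 (stc n)).
  by move=> m m0 /(proj1 (stc m)) [_ Km]; apply: Hm.
move=> H; apply: boolean_of_clean => //.
case: H => [[n0 Ht _]|[[Hc _]|[[n0 Ht _]|[Hc _]]]].
- by have [] := (proj1 (tc n)) Ht.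
- exact: Hc.
- by have [/sc_c] := (proj1 (stc n)) Ht.
- exact: sc_c.
Qed.
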